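(* Let $G$ be a brick and let $X,Y\subseteq V(G)$ be such that $\overline{X}$ and $\overline{Y}$ are nonempty and disjoint, $G/X$ and $G/Y$ are bricks, and the graph $H=(G/(\overline{X}\to\overline{x}))/(\overline{Y}\to\overline{y})$ is a bipartite matching covered graph. Then every edge of $H$ incident with $\overline{x}$ is removable in $H$.
   Context: Graphs are finite and loopless; multiple edges allowed. For $X\subseteq V(G)$, $\overline{X}=V(G)\setminus X$ and $\partial(X)$ is the set of edges with exactly one end in $X$. $G/(X\to x)$ (or $G/X$) is obtained by identifying all vertices of $X$ into a new vertex $x$ and deleting edges with both ends in $X$. A graph is matching covered if it is connected, has at least two vertices, and every edge lies in a perfect matching. A cut $\partial(X)$ is tight if every perfect matching contains exactly one of its edges, trivial if $|X|=1$ or $|\overline{X}|=1$. A brick is a nonbipartite matching covered graph all of whose tight cuts are trivial. An edge $e$ of a matching covered graph $H$ is removable if $H-e$ is matching covered. *)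

(* Defs.v *)
From mathcomp Require Import ssreflect ssrfun ssrbool eqtype ssrnat seq choice.
From mathcomp Require Import fintype finset fingraph.
Set Implicit Arguments. Unset Strict Implicit. Unset Printing Implicit Defensive.

(* A finite multigraph: a finite vertex type, a finite edge type, and the two
   ends of each edge (orientation is irrelevant everywhere below). *)
Record mgraph := MGraph {
  gV : finType;
  gE : finType;
  esrc : gE -> gV;
  etgt : gE -> gV }.

Arguments esrc {G} e : rename.
Arguments etgt {G} e : rename.

Definition loopless (G : mgraph) : Prop := forall e : gE G, esrc e != etgt e.

Definition incident (G : mgraph) (v : gV G) (e : gE G) : bool :=
  (esrc e == v) || (etgt e == v).

Definition perfect_matching (G : mgraph) (M : {set gE G}) : Prop :=
  forall v : gV G, #|[set e in M | incident v e]| = 1.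

Definition adj (G : mgraph) : rel (gV G) :=
  fun v w => [exists e : gE G,
     ((esrc e == v) && (etgt e == w)) || ((esrc e == w) && (etgt e == v))].

Definition connected (G : mgraph) : Prop :=
  forall v w : gV G, connect (@adj G) v w.

Definition cut (G : mgraph) (X : {set gV G}) : {set gE G} :=
  [set e : gE G | (esrc e \in X) != (etgt e \in X)].

(* matching covered (graphs are loopless by convention) *)
Definition matching_covered (G : mgraph) : Prop :=
  [/\ loopless G, connected G, 2 <= #|gV G| &
      forall e : gE G, exists M : {set gE G}, perfect_matching M /\ e \in M].

Definition bipartite (G : mgraph) : Prop :=
  exists A : {set gV G}, forall e : gE G, (esrc e \in A) != (etgt e \in A).

Definition tight_cut (G : mgraph) (X : {set gV G}) : Prop :=
  forall M : {set gE G}, perfect_matching M -> #|M :&: cut X| = 1.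

Definition trivial_cut (G : mgraph) (X : {set gV G}) : Prop :=
  #|X| = 1 \/ #|~: X| = 1.

Definition brick (G : mgraph) : Prop :=
  [/\ matching_covered G, ~ bipartite G &
      forall X : {set gV G}, tight_cut X -> trivial_cut X].

Definition del_edge (G : mgraph) (e : gE G) : mgraph :=
  @MGraph (gV G) {f : gE G | f != e}
     (fun f => esrc (val f)) (fun f => etgt (val f)).

Definition removable (G : mgraph) (e : gE G) : Prop :=
  matching_covered (del_edge e).

(* G/(X -> x): vertices are [None] (the new vertex x) and the vertices outside
   X; edges are those with not both ends in X. *)
Definition cvert (G : mgraph) (X : {set gV G}) : finType :=
  option {v : gV G | v \notin X}.

Definition cmap (G : mgraph) (X : {set gV G}) (v : gV G) : cvert X :=
  insub v.

Definition contract (G : mgraph) (X : {set gV G}) : mgraph :=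
  @MGraph (cvert X)
     {e : gE G | ~~ ((esrc e \in X) && (etgt e \in X))}
     (fun f => cmap X (esrc (val f))) (fun f => cmap X (etgt (val f))).

Definition cvtx (G : mgraph) (X : {set gV G}) : gV (contract X) := None.

(* Main.v *)
Require Import Defs.
From mathcomp Require Import ssreflect ssrfun ssrbool eqtype ssrnat seq choice.
From mathcomp Require Import fintype finset fingraph bigop.
From mathcomp Require Import zify.
Set Implicit Arguments. Unset Strict Implicit. Unset Printing Implicit Defensive.

Section Gen.
Variable G : mgraph.
Implicit Types (F M : {set gE G}) (P : {set gV G}).

Definition deg F (v : gV G) := #|[set g in F | incident v g]|.
Definition inside P := [set g : gE G | (esrc g \in P) && (etgt g \in P)].

Lemma sum_ind (T : finType) (P : {pred T}) (Q : pred T) :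
  \sum_(i in P) (Q i : nat) = #|[set i in P | Q i]|.
Proof.
rewrite -sum1_card big_mkcond /= [RHS]big_mkcond /=.
apply: eq_bigr => i _; rewrite inE; by case: (i \in P); case: (Q i).
Qed.

Lemma GL F P : loopless G ->
  \sum_(v in P) deg F v = 2 * #|F :&: inside P| + #|F :&: cut P|.
Proof.
move=> ll.
have E1 : forall v, deg F v = \sum_(g in F) (incident v g : nat).
  by move=> v; rewrite /deg sum_ind.
rewrite (eq_bigr _ (fun v _ => E1 v)) exchange_big /=.
have E2 : forall g, \sum_(v in P) (incident v g : nat) =
   2 * (g \in inside P) + (g \in cut P).
  move=> g; rewrite /incident.
  have -> : \sum_(v in P) (((esrc g == v) || (etgt g == v)) : nat) =
      \sum_(v in P) ((esrc g == v) : nat) + \sum_(v in P) ((etgt g == v) : nat).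
    rewrite -big_split /=; apply: eq_bigr => v _.
    have := ll g; case: (esrc g =P v) => [->|_]; case: (etgt g =P v) => [->|_] //=.
    by rewrite eqxx.
  rewrite !sum_ind.
  have C : forall w, #|[set i in P | w == i]| = (w \in P).
    move=> w; case: (boolP (w \in P)) => Hw.
      by apply/eqP/cards1P; exists w; apply/setP => i; rewrite !inE eq_sym; case: (i =P w) => [->|]; [rewrite Hw | rewrite andbF].
    apply/eqP; rewrite cards_eq0; apply/eqP/setP => i; rewrite !inE.
    by case: (w =P i) => [<-|]; [rewrite (negbTE Hw)| rewrite andbF].
  rewrite !C !inE; by case: (esrc g \in P); case: (etgt g \in P).
rewrite (eq_bigr _ (fun g _ => E2 g)) big_split /= -big_distrr /= !sum_ind.
by congr (2 * #|_| + #|_|); apply/setP => g; rewrite !inE.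
Qed.
End Gen.

Section Hall.
Variables (T U : finType) (u0 : U).
Definition NB (r : T -> U -> bool) (S : {set T}) := [set u | [exists t in S, r t u]].

Lemma hall_gen n (A : {set T}) (r : T -> U -> bool) : #|A| <= n ->
  (forall S : {set T}, S \subset A -> #|S| <= #|NB r S|) ->
  exists phi : T -> U, {in A &, injective phi} /\ {in A, forall t, r t (phi t)}.
Proof.
elim: n A r => [|n IH] A r Hn HH.
  exists (fun _ => u0); move: Hn; rewrite leqn0 cards_eq0 => /eqP ->.
  by split => [x y|x]; rewrite inE.
case: (boolP [exists S0 : {set T}, [&& S0 \subset A, S0 != set0, S0 != A &
          #|NB r S0| <= #|S0|]]).
  case/existsP => S0 /and4P [sS0 nz0 ne0 le0].
  have ltS0 : #|S0| < #|A| by apply: proper_card; rewrite properEneq ne0.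
  have [phi1 [inj1 r1]] : exists phi : T -> U, {in S0 &, injective phi} /\ {in S0, forall t, r t (phi t)}.
    apply: (IH S0 r); first by lia.
    by move=> S sS; apply: HH; apply: subset_trans sS sS0.
  pose r2 t u := r t u && (u \notin NB r S0).
  have [phi2 [inj2 r2P]] : exists phi : T -> U, {in A :\: S0 &, injective phi} /\ {in A :\: S0, forall t, r2 t (phi t)}.
    apply: (IH (A :\: S0) r2).
      have := cardsID S0 A; rewrite (setIidPr sS0) => E.
      have : 0 < #|S0| by rewrite card_gt0.
      by lia.
    move=> S sS.
    have sU : NB r (S :|: S0) \subset NB r2 S :|: NB r S0.
      apply/subsetP => u uN; rewrite in_setU.
      move: uN; rewrite [u \in NB r _]inE => /existsP [t /andP [tin rtu]].
      case/setUP: tin => tin.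
        case: (boolP (u \in NB r S0)) => Hu; first by rewrite orbT.
        by rewrite orbF; rewrite inE; apply/existsP; exists t; rewrite tin /r2 rtu.
      by apply/orP; right; rewrite inE; apply/existsP; exists t; rewrite tin.
    have dis : S :&: S0 = set0.
      apply/setP => t; rewrite !inE; case tS: (t \in S) => //=.
      by move/subsetP: sS => /(_ t tS); rewrite inE => /andP [/negbTE ->].
    have := HH (S :|: S0); rewrite subUset sS0 andbT.
    have sSA : S \subset A by apply: subset_trans sS (subsetDl _ _).
    move=> /(_ sSA); rewrite cardsU dis cards0 subn0 => H1.
    have := subset_leq_card sU; have := (leq_card_setU (NB r2 S) (NB r S0)).1.
    by lia.
  exists (fun t => if t \in S0 then phi1 t else phi2 t); split.
    move=> x y xA yA /=.
    case: (boolP (x \in S0)) => xS; case: (boolP (y \in S0)) => yS.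
    - by apply: inj1.
    - move=> E; have := r2P y; rewrite !inE yS yA /r2 => /(_ isT) /andP [_].
      by rewrite -E inE; case/negP; apply/existsP; exists x; rewrite xS r1.
    - move=> E; have := r2P x; rewrite !inE xS xA /r2 => /(_ isT) /andP [_].
      by rewrite E inE; case/negP; apply/existsP; exists y; rewrite yS r1.
    - by apply: inj2; rewrite inE ?xS ?yS.
  move=> t tA /=; case: (boolP (t \in S0)) => tS; first by apply: r1.
  by have := r2P t; rewrite inE tS tA /r2 => /(_ isT) /andP [].
rewrite negb_exists => /forallP Hnc.
case: (set_0Vmem A) => [A0|[a aA]].
  by exists (fun _ => u0); rewrite A0; split => [x y|x]; rewrite inE.
have : 0 < #|NB r [set a]|.
  by have := HH [set a]; rewrite sub1set aA cards1 => /(_ isT).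
rewrite card_gt0 => /set0Pn [u]; rewrite inE => /existsP [a' /andP [ha rau]].
move: ha rau; rewrite inE => /eqP -> rau.
pose r' t v := r t v && (v != u).
have [phi' [inj' r'P]] : exists phi : T -> U, {in A :\ a &, injective phi} /\ {in A :\ a, forall t, r' t (phi t)}.
  apply: (IH (A :\ a) r').
    by have := cardsD1 a A; rewrite aA; lia.
  move=> S sS.
  case: (set_0Vmem S) => [->|[s sS0]]; first by rewrite cards0.
  have sSA : S \subset A by apply: subset_trans sS (subsetDl _ _).
  have := Hnc S; rewrite sSA /=.
  have -> : (S != set0) by apply/set0Pn; exists s.
  have -> : (S != A).
    by apply/eqP => E; move/subsetP: sS => /(_ a); rewrite E aA !inE eqxx => /(_ isT).
  rewrite /= -ltnNge => lt1.
  have sU : NB r S \subset NB r' S :|: [set u].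
    apply/subsetP => v vN; rewrite in_setU in_set1; move: vN; rewrite [v \in NB r _]inE => /existsP [t /andP [tS rtv]].
    case: (v =P u) => [->|/eqP nvu]; first by rewrite orbT.
    by rewrite orbF inE; apply/existsP; exists t; rewrite tS /r' rtv nvu.
  have := subset_leq_card sU; have := (leq_card_setU (NB r' S) [set u]).1.
  by rewrite cards1; lia.
exists (fun t => if t == a then u else phi' t); split.
  move=> x y xA yA /=.
  case: (x =P a) => [->|/eqP xa]; case: (y =P a) => [->|/eqP ya] //.
  - move=> E; have := r'P y; rewrite !inE ya yA /r' => /(_ isT) /andP [_].
    by rewrite E eqxx.
  - move=> E; have := r'P x; rewrite !inE xa xA /r' => /(_ isT) /andP [_].
    by rewrite E eqxx.
  - by apply: inj'; rewrite !inE ?xa ?ya.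
move=> t tA /=; case: (t =P a) => [->//|/eqP ta].
by have := r'P t; rewrite !inE ta tA /r' => /(_ isT) /andP [].
Qed.
End Hall.

Section PM.
Variable G : mgraph.
Implicit Types (F M : {set gE G}) (P S : {set gV G}).

Definition other (v : gV G) (h : gE G) := if esrc h == v then etgt h else esrc h.

Lemma adj_sym : symmetric (@adj G).
Proof.
move=> v w; apply/existsP/existsP => [] [e He]; exists e; move: He;
 by rewrite orbC.
Qed.

Lemma adj_other v h : incident v h -> adj v (other v h).
Proof.
rewrite /incident /other => H; apply/existsP; exists h.
case: (esrc h =P v) H => [->|_] /= H; first by rewrite !eqxx.
by rewrite H eqxx ?orbT.
Qed.

Lemma incident_other v h : incident v h -> incident (other v h) h.
Proof.
rewrite /incident /other; case: (esrc h =P v) => [_|_] /=; by rewrite eqxx ?orbT.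
Qed.

Lemma adjP v w : reflect (exists h, incident v h /\ other v h = w /\ incident w h) (adj v w).
Proof.
apply: (iffP existsP) => [[h /orP [/andP [/eqP s /eqP t]|/andP [/eqP s /eqP t]]]|[h [iv [ov iw]]]];
  exists h.
- by rewrite /incident /other s t !eqxx /= orbT.
- rewrite /incident /other s t !eqxx orbT /=; split => //; split => //.
  by case: (w =P v) => [->|].
- move: iv ov iw; rewrite /incident /other.
  case: (esrc h =P v) => [->|/eqP nsv] /= => [_ <-|/eqP tv sw]; first by rewrite !eqxx.
  by rewrite tv sw !eqxx.
Qed.

Lemma ends_other v z h : incident v h -> incident z h -> z = v \/ z = other v h.
Proof.
rewrite /incident /other; case: (esrc h =P v) => [<-|nv] /=.
  by move=> _ /orP [/eqP <-|/eqP <-]; [left|right].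
by move=> /eqP tv /orP [/eqP <-|/eqP <-]; [right|left].
Qed.

Lemma pm_uniq M v h1 h2 : perfect_matching M -> h1 \in M -> h2 \in M ->
  incident v h1 -> incident v h2 -> h1 = h2.
Proof.
move=> /(_ v) /eqP /cards1P [h0 E] m1 m2 i1 i2.
have : h1 \in [set h in M | incident v h] by rewrite inE m1 i1.
have : h2 \in [set h in M | incident v h] by rewrite inE m2 i2.
by rewrite E !inE => /eqP -> /eqP ->.
Qed.

Lemma pm_ex M v : perfect_matching M -> exists h, (h \in M) && incident v h.
Proof.
move=> /(_ v) /eqP /cards1P [h0 E].
exists h0; have : h0 \in [set h in M | incident v h] by rewrite E inE.
by rewrite inE.
Qed.

Lemma closed_conn P : (forall v w, adj v w -> v \in P -> w \in P) ->
  forall v w, connect (@adj G) v w -> v \in P -> w \in P.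
Proof.
move=> cl v w /connectP [p pth ->]; elim: p v pth => //= x p IH v /andP [avx pth] vP.
exact: IH pth (cl _ _ avx vP).
Qed.

Definition NH S := [set t | [exists s in S, adj s t]].

Lemma surplus (A S : {set gV G}) : matching_covered G ->
  (forall g, (esrc g \in A) != (etgt g \in A)) ->
  S \subset A -> S != set0 -> S != A -> #|S| < #|NH S|.
Proof.
move=> [ll conn _ cov] bip sSA nz ne.
have adjA : forall v w, adj v w -> (v \in A) != (w \in A).
  move=> v w /existsP [h /orP [] /andP [/eqP <- /eqP <-]]; first exact: bip.
  by rewrite eq_sym; apply: bip.
have [s sS] := set0Pn _ nz.
have [a aA aS] : exists2 a, a \in A & a \notin S.
  case: (boolP [exists a, (a \in A) && (a \notin S)]).
    by case/existsP => a /andP [] ? ?; exists a.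
  rewrite negb_exists => /forallP H; case/negP: ne; rewrite eqEsubset sSA /=.
  by apply/subsetP => x xA; have := H x; rewrite xA /= negbK.
pose C := S :|: NH S.
have : ~ (forall v w, adj v w -> v \in C -> w \in C).
  move=> cl; have := closed_conn cl (conn s a); rewrite inE sS => /(_ isT).
  rewrite inE (negbTE aS) /= inE => /existsP [s' /andP [s'S /adjA]].
  by rewrite aA (subsetP sSA _ s'S).
move=> ncl.
have [v [w [avw vC wC]]] : exists v w, [/\ adj v w, v \in C & w \notin C].
  case: (boolP [exists v, exists w, [&& adj v w, v \in C & w \notin C]]).
    by case/existsP => v /existsP [w /and3P [? ? ?]]; exists v, w.
  rewrite negb_exists => /forallP H; case: ncl => v w avw vC.
  have := H v; rewrite negb_exists => /forallP /(_ w); rewrite avw vC /=.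
  by rewrite negbK.
have vS : v \notin S.
  apply/negP => vS; case/negP: wC; rewrite !inE; apply/orP; right.
  by apply/existsP; exists v; rewrite vS.
have vN : v \in NH S by move: vC; rewrite inE (negbTE vS).
have wS : w \notin S by move: wC; rewrite inE negb_or => /andP [].
have [g [ivg [ovg iwg]]] := adjP _ _ avw.
have [M [pm gM]] := cov g.
pose pk s := odflt g [pick h in M | incident s h].
have pkP : forall s, (pk s \in M) && incident s (pk s).
  move=> z; rewrite /pk; case: pickP => //= nn.
  by have [h hh] := pm_ex z pm; have := nn h; rewrite hh.
pose p s := other s (pk s).
have vA : v \notin A.
  move: vN; rewrite inE => /existsP [s' /andP [s'S /adjA]].
  by rewrite (subsetP sSA _ s'S); case: (v \in A).
have pS : {in S, forall s, p s \in NH S :\ v}.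
  move=> z sS'; have /andP [pM pI] := pkP z.
  rewrite !inE; apply/andP; split; last by apply/existsP; exists z; rewrite sS' adj_other.
  apply/negP => /eqP pv.
  have Ev : pk z = g.
    apply: (pm_uniq (v := v) pm pM gM) => //; rewrite -pv; exact: incident_other.
  rewrite Ev in pI; case: (ends_other ivg pI) => Ez.
    by move: vS; rewrite -Ez sS'.
  by move: wS; rewrite -ovg -Ez sS'.
have pinj : {in S &, injective p}.
  move=> s1 s2 s1S s2S E.
  have /andP [m1 i1] := pkP s1; have /andP [m2 i2] := pkP s2.
  have q1 := incident_other i1; have q2 := incident_other i2.
  rewrite -/(p s1) E in q1; rewrite -/(p s2) in q2.
  have Eh := pm_uniq pm m1 m2 q1 q2.
  have a1 := adj_other i1; rewrite -/(p s1) in a1.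
  have nA1 : p s1 \notin A by have := adjA _ _ a1; rewrite (subsetP sSA _ s1S); case: (_ \in A).
  rewrite -Eh in i2; case: (ends_other i1 i2) => // Es2.
  by move: nA1; rewrite /p -Es2 (subsetP sSA _ s2S).
have sub : p @: S \subset NH S :\ v.
  by apply/subsetP => x /imsetP [z zS ->]; apply: pS.
have := subset_leq_card sub; rewrite (card_in_imset pinj).
by rewrite [#|NH S|](cardsD1 v) vN add1n ltnS.
Qed.
End PM.

Definition bipA (H : mgraph) (A : {set gV H}) := forall g : gE H, (esrc g \in A) != (etgt g \in A).

Lemma other_bip (H : mgraph) (A : {set gV H}) s g : bipA A -> incident s g ->
  (other s g \in A) = ~~ (s \in A).
Proof.
move=> /(_ g); rewrite /incident /other; case: (esrc g =P s) => [->|_] /=.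
  by case: (s \in A); case: (etgt g \in A).
move=> + /eqP E; rewrite -E; case: (etgt g \in A); by case: (esrc g \in A).
Qed.

Lemma adj_bip (H : mgraph) (A : {set gV H}) v w : bipA A -> adj v w -> (w \in A) = ~~ (v \in A).
Proof. by move=> bip /adjP [h [iv [<- _]]]; apply: other_bip. Qed.

Lemma cut_other (H : mgraph) (P : {set gV H}) v h : incident v h ->
  (h \in cut P) = ((v \in P) != (other v h \in P)).
Proof.
rewrite /cut in_set /incident /other; case: (esrc h =P v) => [->//|_] /= /eqP ->.
by rewrite eq_sym.
Qed.

Lemma pm_sum (H : mgraph) (M : {set gE H}) (P : {set gV H}) : perfect_matching M ->
  \sum_(v in P) deg M v = #|P|.
Proof. by move=> pm; rewrite -sum1_card; apply: eq_bigr => v _; apply: pm. Qed.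

Lemma bip_card (H : mgraph) (A : {set gV H}) (N : {set gE H}) :
  loopless H -> bipA A -> perfect_matching N -> #|A| = #|N|.
Proof.
move=> ll bip pm; rewrite -(pm_sum A pm) GL //.
have -> : N :&: inside A = set0.
  apply/setP => g; rewrite !inE; have := bip g.
  by case: (esrc g \in A); case: (etgt g \in A); rewrite ?andbF.
have -> : N :&: cut A = N by apply/setP => g; rewrite !inE bip andbT.
by rewrite cards0.
Qed.

Lemma bipC (H : mgraph) (A : {set gV H}) : bipA A -> bipA (~: A).
Proof. by move=> bip g; rewrite !inE; have := bip g; case: (_ \in A); case: (_ \in A). Qed.

Section HL.
Variable H : mgraph.
Variables (A : {set gV H}) (e : gE H) (xb : gV H).
Hypotheses (mc : matching_covered H) (bip : bipA A) (xA : xb \in A) (ie : incident xb e).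

Lemma Hlevel f : f != e -> (forall N, perfect_matching N -> f \in N -> e \in N) ->
  exists S T : {set gV H}, [/\ (xb \in S) && (S \subset A), T \subset ~: A, #|S| = #|T|,
    (esrc e \notin T) && (etgt e \notin T) &
    forall g, g != e -> forall s, s \in S -> incident s g -> other s g \in T].
Proof.
move=> fe dep.
have [ll conn two cov] := mc.
have [N0 [pm0 fN0]] := cov f.
have cardAB : #|A| = #|~: A|.
  by rewrite (bip_card ll bip pm0) (bip_card ll (bipC bip) pm0).
pose af := if esrc f \in A then esrc f else etgt f.
have iaf : incident af f by rewrite /af /incident; case: (esrc f \in A); rewrite eqxx ?orbT.
have afA : af \in A.
  rewrite /af; case: (boolP (esrc f \in A)) => // H1.
  by have := bip f; rewrite (negbTE H1); case: (etgt f \in A).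
pose tf := other af f.
have tfA : tf \notin A by rewrite /tf (other_bip bip iaf) afA.
pose r a t := [&& t \notin A, t != tf & [exists g, [&& g != e, incident a g & other a g == t]]].
pose A0 := A :\ af.
have noPhi : ~ exists phi : gV H -> gV H, {in A0 &, injective phi} /\ {in A0, forall t, r t (phi t)}.
  case=> phi [inj rP].
  pose ga a := odflt f [pick g | [&& g != e, incident a g & other a g == phi a]].
  have gaP : forall a, a \in A0 -> [&& ga a != e, incident a (ga a) & other a (ga a) == phi a].
    move=> a aA0; rewrite /ga; case: pickP => //= nn.
    have := rP a aA0; rewrite /r => /and3P [_ _ /existsP [g Hg]].
    by have := nn g; rewrite Hg.
  have phiA : forall a, a \in A0 -> (phi a \notin A) && (phi a != tf).
    by move=> a /rP /and3P [-> -> _].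
  have surj : forall v, v \notin A -> v != tf -> exists2 a, a \in A0 & phi a = v.
    have sub : phi @: A0 \subset ~: A :\ tf.
      apply/subsetP => v /imsetP [a aA0 ->]; rewrite !inE.
      by have /andP [-> ->] := phiA a aA0.
    have ce : #|~: A :\ tf| <= #|phi @: A0|.
      rewrite (card_in_imset inj).
      have := cardsD1 tf (~: A); rewrite inE tfA /= => E1.
      have := cardsD1 af A; rewrite afA /= => E2.
      rewrite /A0; move: E1 E2 cardAB; clear; lia.
    have Eq : phi @: A0 = ~: A :\ tf by apply/eqP; rewrite eqEcard sub ce.
    move=> v vA vt; have : v \in phi @: A0 by rewrite Eq !inE vA vt.
    by case/imsetP => a aA0 ->; exists a.
  pose N := f |: [set ga a | a in A0].
  have endsf : forall v, incident v f -> v = af \/ v = tf by move=> v; apply: ends_other.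
  have endsg : forall a v, a \in A0 -> incident v (ga a) -> v = a \/ v = phi a.
    move=> a v aA0 iv; have /and3P [_ ia /eqP <-] := gaP a aA0; exact: ends_other.
  have A0A : forall a, a \in A0 -> (a \in A) && (a != af).
    by move=> a; rewrite !inE andbC.
  have pmN : perfect_matching N.
    move=> v.
    suff [h Hh] : exists h, forall g, (g \in N) && incident v g = (g == h).
      apply/eqP/cards1P; exists h; apply/setP => g; by rewrite in_set1 -Hh !inE.
    case: (boolP (v \in A)) => vA.
      case: (v =P af) => [->|/eqP vaf].
        exists f => g; apply/idP/idP => [|/eqP ->]; last by rewrite !inE eqxx iaf.
        case/andP; rewrite !inE => /orP [//|/imsetP [a aA0 ->]] ig.
        case: (endsg a af aA0 ig) => E.
          by have := A0A a aA0; rewrite -E eqxx andbF.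
        by have := phiA a aA0; rewrite -E afA.
      have vA0 : v \in A0 by rewrite !inE vaf.
      have /and3P [_ iv _] := gaP v vA0.
      exists (ga v) => g; apply/idP/idP => [|/eqP ->]; last first.
        by rewrite !inE iv andbT; apply/orP; right; apply/imsetP; exists v.
      case/andP; rewrite !inE => /orP [/eqP ->|/imsetP [a aA0 ->]] ig.
        by case: (endsf v ig) => E; [move/eqP: vaf|move: tfA; rewrite -E vA].
      case: (endsg a v aA0 ig) => [->//|E].
      by have := phiA a aA0; rewrite -E vA.
    case: (v =P tf) => [->|/eqP vtf].
      have itf : incident tf f by apply: incident_other.
      exists f => g; apply/idP/idP => [|/eqP ->]; last by rewrite !inE eqxx itf.
      case/andP; rewrite !inE => /orP [//|/imsetP [a aA0 ->]] ig.
      case: (endsg a tf aA0 ig) => E.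
        by have := A0A a aA0; rewrite -E (negbTE tfA).
      by have := phiA a aA0; rewrite -E eqxx andbF.
    have [a0 a0A0 Ea0] := surj v vA vtf.
    have /and3P [_ _ /eqP oa0] := gaP a0 a0A0.
    have iv : incident v (ga a0) by rewrite -Ea0 -oa0; apply: incident_other; have /and3P [] := gaP a0 a0A0.
    exists (ga a0) => g; apply/idP/idP => [|/eqP ->]; last first.
      by rewrite !inE iv andbT; apply/orP; right; apply/imsetP; exists a0.
    case/andP; rewrite !inE => /orP [/eqP ->|/imsetP [a aA0 ->]] ig.
      by case: (endsf v ig) => E; [move: vA; rewrite E afA|move/eqP: vtf].
    case: (endsg a v aA0 ig) => E.
      by have := A0A a aA0; rewrite -E (negbTE vA).
    by rewrite (inj a a0 aA0 a0A0) // Ea0 E.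
  have eN : e \in N by apply: (dep N) => //; rewrite !inE eqxx.
  move: eN; rewrite !inE eq_sym (negbTE fe) /= => /imsetP [a aA0 Ea].
  by have := gaP a aA0; rewrite -Ea eqxx.
have [S0 [sS0 ltS0]] : exists S0 : {set gV H}, S0 \subset A0 /\ #|NB r S0| < #|S0|.
  case: (boolP [exists S0 : {set gV H}, (S0 \subset A0) && (#|NB r S0| < #|S0|)]).
    by case/existsP => S0 /andP [? ?]; exists S0.
  rewrite negb_exists => /forallP HS; case: noPhi.
  apply: (hall_gen af (n := #|A0|)) => // S sS.
  by have := HS S; rewrite sS /= -leqNgt.
have S0A : S0 \subset A by apply: subset_trans sS0 (subsetDl _ _).
have nz : S0 != set0 by apply/eqP => E; move: ltS0; rewrite E cards0.
have ne : S0 != A.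
  by apply/eqP => E; move/subsetP: sS0 => /(_ af); rewrite E afA !inE eqxx => /(_ isT).
have sur := surplus mc bip S0A nz ne.
pose be := other xb e.
have beA : be \notin A by rewrite /be (other_bip bip ie) xA.
pose T := NB r S0 :|: [set tf].
have tfNB : tf \notin NB r S0.
  by rewrite inE; apply/negP => /existsP [s /andP [_ /and3P [_ /eqP + _]]].
have cT : #|T| = #|NB r S0| + 1 by rewrite /T setUC cardsU1 tfNB addnC.
have nbh : forall t, t \in NH S0 -> t \in T \/ (t = be /\ xb \in S0).
  move=> t; rewrite inE => /existsP [s /andP [sS /adjP [h [hs [os it]]]]].
  case: (t =P tf) => [->|/eqP ttf]; first by left; rewrite !inE eqxx orbT.
  case: (h =P e) => [Eh|/eqP he].
    rewrite Eh in hs os; case: (ends_other ie hs) => Es.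
      by right; split; [rewrite -os Es|rewrite -Es].
    by move: (subsetP S0A _ sS); rewrite Es (negbTE beA).
  left; rewrite !inE; apply/orP; left; apply/existsP; exists s; rewrite sS /r /=.
  have tA : t \notin A by rewrite -os (other_bip bip hs) (subsetP S0A _ sS).
  rewrite tA ttf /=; apply/existsP; exists h; by rewrite he hs os eqxx.
have nbT : ~~ (xb \in S0) || (be \in T) -> False.
  move=> Hc; have sub : NH S0 \subset T.
    apply/subsetP => t /nbh [//|[-> xS]]; move: Hc; by rewrite xS.
  have := subset_leq_card sub; move: sur ltS0 cT; clear; lia.
have xS : xb \in S0 by case: (boolP (xb \in S0)) => // H1; case: nbT; rewrite H1.
have beT : be \notin T by apply/negP => H1; case: nbT; rewrite H1 orbT.
have sub : NH S0 \subset be |: T.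
  by apply/subsetP => t /nbh [H1|[-> _]]; rewrite in_setU1 ?eqxx // H1 orbT.
have := subset_leq_card sub; rewrite cardsU1 beT => H2.
exists S0, T; split.
- by rewrite xS S0A.
- apply/subsetP => t; rewrite !inE => /orP [/existsP [s /andP [_ /and3P [-> _ _]]]|/eqP ->] //.
- move: sur ltS0 cT H2; clear; lia.
- case: (ends_other ie (v := xb) (z := esrc e)) => [|Es|Es].
  + by rewrite /incident eqxx.
  + rewrite Es.
    have xT : xb \notin T.
      apply/negP => xT; move: xT; rewrite !inE => /orP [/existsP [s /andP [_ /and3P [+ _ _]]]|/eqP Ex].
        by rewrite xA.
      by move: tfA; rewrite -Ex xA.
    rewrite xT /=.
    case: (ends_other ie (v := xb) (z := etgt e)) => [|Et|Et].
    * by rewrite /incident eqxx orbT.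
    * by rewrite Et.
    * by rewrite Et.
  + rewrite Es beT /=.
    case: (ends_other ie (v := xb) (z := etgt e)) => [|Et|Et].
    * by rewrite /incident eqxx orbT.
    * rewrite Et; apply/negP; rewrite !inE => /orP [/existsP [s /andP [_ /and3P [+ _ _]]]|/eqP Ex].
        by rewrite xA.
      by move: tfA; rewrite -Ex xA.
    * by rewrite Et.
- move=> g ge s sS hs.
  case: (other s g =P tf) => [->|/eqP ot]; first by rewrite !inE eqxx orbT.
  rewrite !inE; apply/orP; left; apply/existsP; exists s; rewrite sS /r /=.
  rewrite (other_bip bip hs) (subsetP S0A _ sS) ot /=.
  by apply/existsP; exists g; rewrite ge hs eqxx.
Qed.

Lemma pm_count (M : {set gE H}) (P : {set gV H}) : perfect_matching M ->
  #|P| = 2 * #|M :&: inside P| + #|M :&: cut P|.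
Proof. by move=> pm; rewrite -(pm_sum P pm) GL //; case: mc. Qed.

Lemma Hremovable : (exists f, f != e) ->
  (forall S T : {set gV H}, [/\ (xb \in S) && (S \subset A), T \subset ~: A, #|S| = #|T|,
    (esrc e \notin T) && (etgt e \notin T) &
    forall g, g != e -> forall s, s \in S -> incident s g -> other s g \in T] -> False) ->
  removable e.
Proof.
move=> [f0 f0e] noST.
have [ll conn two cov] := mc.
have cov' : forall f, f != e -> exists N, [/\ perfect_matching N, f \in N & e \notin N].
  move=> f fe.
  case: (boolP [exists N : {set gE H}, [&& [forall v, #|[set g in N | incident v g]| == 1], f \in N & e \notin N]]).
    case/existsP => N /and3P [/forallP pm fN eN]; exists N; split => // v; exact/eqP.
  rewrite negb_exists => /forallP HN.
  have dep : forall N, perfect_matching N -> f \in N -> e \in N.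
    move=> N pm fN; have := HN N; rewrite fN /= negb_and negbK.
    have -> : [forall v, #|[set g in N | incident v g]| == 1] by apply/forallP => v; apply/eqP.
    by [].
  have [S [T HST]] := Hlevel fe dep.
  by case: (noST S T HST).
pose D := del_edge e.
have connD : connected D.
  pose be := other xb e.
  pose C : {set gV H} := [set w | connect (@adj D) xb w].
  have clC : forall v w, @adj D v w -> v \in C -> w \in C.
    move=> v w avw; rewrite !inE => cv; apply: connect_trans cv _; exact: connect1.
  have beC : be \in C.
    apply/negPn/negP => nbe.
    have cutC : forall M : {set gE H}, M :&: cut C \subset [set e].
      move=> M; apply/subsetP => g; rewrite in_setI => /andP [_]; rewrite /cut in_set => cg; rewrite in_set1.
      apply/negPn/negP => ge.
      have a1 : @adj D (esrc g) (etgt g).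
        apply/existsP; exists (Sub g ge : gE D); by rewrite /= !eqxx.
      move: cg; case: (boolP (esrc g \in C)) => sC.
        by rewrite (clC _ _ a1 sC).
      have a2 : @adj D (etgt g) (esrc g) by rewrite adj_sym.
      by case: (boolP (etgt g \in C)) => // tC; rewrite (clC _ _ a2 tC) in sC.
    have ecut : e \in cut C.
      have xC : xb \in C by rewrite inE connect0.
      by rewrite (cut_other _ ie) xC (negbTE nbe).
    have [N [pmN _ eN]] := cov' _ f0e.
    have [N0 [pm0 eN0]] := cov e.
    have c0 : #|N :&: cut C| = 0.
      apply/eqP; rewrite cards_eq0; apply/eqP/setP => g; rewrite in_set0.
      apply/negP => gi; move/subsetP: (cutC N) => /(_ g gi); rewrite inE => /eqP Eg.
      by move: gi eN; rewrite Eg inE => /andP [-> _].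
    have c1 : #|N0 :&: cut C| = 1.
      apply/eqP/cards1P; exists e; apply/eqP; rewrite eqEsubset cutC sub1set inE eN0 ecut.
      by [].
    have := pm_count C pmN; have := pm_count C pm0; rewrite c0 c1.
    move: (#|N :&: inside C|) (#|N0 :&: inside C|) (#|C|); clear; lia.
  have allC : forall v, v \in C.
    move=> v; apply: (closed_conn (P := C) _ (conn xb v)); last by rewrite inE connect0.
    move=> u w /adjP [h [iu [ou iw]]] uC.
    case: (h =P e) => [Eh|/eqP he].
      rewrite Eh in iu ou iw; case: (ends_other ie iw) => [->|->]; first by rewrite inE connect0.
      exact: beC.
    apply: clC uC; apply/adjP; exists (Sub h he : gE D); by split.
  move=> v w; have := allC v; have := allC w; rewrite !inE => cw cv.
  apply: connect_trans cw; by rewrite (sym_connect_sym (@adj_sym D)).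
split.
- by move=> g; apply: ll.
- exact: connD.
- exact: two.
- move=> g'; have fe : val g' != e := valP g'.
  have [N [pm fN eN]] := cov' _ fe.
  exists [set g : gE D | val g \in N]; split; last by rewrite inE.
  move=> v; rewrite -(pm v).
  have -> : [set g : gE H in N | @incident H v g] = val @: [set g : gE D in [set g : gE D | val g \in N] | incident v g].
    apply/setP => g; rewrite !inE; apply/idP/idP => [/andP [gN ig]|/imsetP [h]].
      have ge : g != e by apply/negP => /eqP E; move: eN; rewrite -E gN.
      apply/imsetP; exists (Sub g ge : gE D) => //; by rewrite !inE gN.
    by rewrite !inE => /andP [hN ih] ->; rewrite hN.
  by rewrite card_imset //; apply: val_inj.
Qed.
End HL.

Section HC.
Variable H : mgraph.
Variables (A : {set gV H}) (F : {set gE H}) (x y : gV H) (e : gE H) (S T : {set gV H}).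
Hypotheses (ll : loopless H) (bip : bipA A) (cAB : #|A| = #|~: A|) (xA : x \in A) (xy : x != y)
  (d1 : forall w, w != x -> w != y -> deg F w = 1).

Lemma sum_bip (P : {set gV H}) : bipA P -> \sum_(v in P) deg F v = #|F|.
Proof.
move=> bP; rewrite GL //.
have -> : F :&: inside P = set0.
  apply/setP => g; rewrite !inE; have := bP g.
  by case: (esrc g \in P); case: (etgt g \in P); rewrite ?andbF.
have -> : F :&: cut P = F by apply/setP => g; rewrite !inE bP andbT.
by rewrite cards0.
Qed.

Lemma sum_one (P : {set gV H}) : x \notin P -> y \notin P -> \sum_(v in P) deg F v = #|P|.
Proof.
move=> xP yP; rewrite -sum1_card; apply: eq_bigr => v vP; apply: d1.
  by apply/eqP => E; move: xP; rewrite -E vP.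
by apply/eqP => E; move: yP; rewrite -E vP.
Qed.

Lemma HcountA : y \in A -> deg F x + deg F y = 2.
Proof.
move=> yA.
have := sum_bip bip; have := sum_bip (bipC bip).
rewrite sum_one ?inE ?xA ?yA // (big_setD1 x xA) (big_setD1 y) /=; last by rewrite !inE eq_sym xy.
rewrite sum_one ?inE ?eqxx ?andbF // => E1 E2.
have := cardsD1 x A; have := cardsD1 y (A :\ x); rewrite xA !inE eq_sym xy yA /=.
move: E1 E2 cAB; clear; lia.
Qed.

Lemma HcountB : y \notin A -> deg F x = deg F y.
Proof.
move=> yA.
have yC : y \in ~: A by rewrite inE.
have := sum_bip bip; have := sum_bip (bipC bip).
rewrite (big_setD1 x xA) (big_setD1 y yC) /= sum_one ?inE ?eqxx ?andbF //; last first.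
  by apply/negP => /andP [_]; rewrite xA.
rewrite sum_one ?inE ?eqxx ?andbF //; last first.
  by rewrite (negbTE yA) andbF.
move=> E1 E2.
have := cardsD1 x A; have := cardsD1 y (~: A); rewrite xA yC /=.
move: E1 E2 cAB; clear; lia.
Qed.

Lemma inside_other (P : {set gV H}) (v : gV H) (h : gE H) : incident v h ->
  (h \in inside P) = (v \in P) && (other v h \in P).
Proof.
rewrite /inside in_set /incident /other; case: (esrc h =P v) => [->//|_] /= /eqP ->.
by rewrite andbC.
Qed.

Lemma other_end (v : gV H) (h : gE H) : incident v h -> (other v h == esrc h) || (other v h == etgt h).
Proof. by rewrite /other; case: (esrc h == v); rewrite eqxx ?orbT. Qed.

Lemma HcountST : x \in S -> S \subset A -> T \subset ~: A -> #|S| = #|T| ->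
  (esrc e \notin T) && (etgt e \notin T) -> incident x e ->
  (forall g, g != e -> forall s, s \in S -> incident s g -> other s g \in T) -> y \notin A ->
  (y \notin T -> deg F x <= 2) /\ (y \in T -> #|F :&: cut (S :|: T)| = 2 * (e \in F)).
Proof.
move=> xS SA TA cST eT ie STg yA.
have kk := HcountB yA.
have sA : forall v, v \in S -> v \in A by move=> v; apply: (subsetP SA).
have tA : forall v, v \in T -> v \notin A by move=> v /(subsetP TA); rewrite inE.
have xT : x \notin T by apply/negP => /tA; rewrite xA.
have yS : y \notin S by apply/negP => /sA; rewrite (negbTE yA).
have beA : other x e \notin A by rewrite (other_bip bip ie) xA.
have beS : other x e \notin S by apply/negP => /sA; rewrite (negbTE beA).
have beT : other x e \notin T.
  by case/orP: (other_end ie) => /eqP ->; case/andP: eT.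
have iS : F :&: inside S = set0.
  apply/setP => g; rewrite !inE; apply/negP => /and3P [_ /sA a1 /sA a2].
  by have := bip g; rewrite a1 a2.
have iT : F :&: inside T = set0.
  apply/setP => g; rewrite !inE; apply/negP => /and3P [_ /tA a1 /tA a2].
  by have := bip g; rewrite (negbTE a1) (negbTE a2).
have key : F :&: cut S = (F :&: inside (S :|: T)) :|: (F :&: [set e]).
  apply/setP => g; rewrite in_setU !in_setI; case: (boolP (g \in F)) => //= gF.
  apply/idP/idP.
    rewrite /cut in_set; case: (boolP (esrc g \in S)) => sS /=.
      move=> tS.
      have ig : incident (esrc g) g by rewrite /incident eqxx.
      case: (g =P e) => [->|/eqP ge]; first by rewrite inE eqxx orbT.
      have := STg g ge _ sS ig; rewrite /other eqxx => tT.
      by rewrite /inside !inE sS tT orbT.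
    move=> tS0; have tS : etgt g \in S by move: tS0; case: (etgt g \in S).
    have ig : incident (etgt g) g by rewrite /incident eqxx orbT.
    case: (g =P e) => [->|/eqP ge]; first by rewrite inE eqxx orbT.
    have := STg g ge _ tS ig; rewrite /other.
    case: (esrc g =P etgt g) => [E|_] sT; first by move: sS; rewrite E tS.
    by rewrite /inside !inE tS sT orbT.
  case/orP => [|]; last first.
    rewrite inE => /eqP ->; rewrite (cut_other _ ie) xS.
    by rewrite (negbTE beS).
  rewrite /inside /cut !inE => /andP [/orP [s1|s1] /orP [t1|t1]].
  - by have := bip g; rewrite (sA _ s1) (sA _ t1).
  - by rewrite s1; apply/negP => t2; move: (tA _ t1); rewrite (sA _ t2).
  - rewrite t1; case s2: (esrc g \in S) => //; by move: (tA _ s1); rewrite (sA _ s2).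
  - by have := bip g; rewrite (negbTE (tA _ s1)) (negbTE (tA _ t1)).
have dis : e \notin inside (S :|: T).
  by rewrite (inside_other _ ie) !inE (negbTE beS) (negbTE beT) andbF.
have cS : #|F :&: cut S| = #|F :&: inside (S :|: T)| + (e \in F).
  rewrite key cardsU.
  have -> : F :&: inside (S :|: T) :&: (F :&: [set e]) = set0.
    apply/setP => g; rewrite in_set0 !in_setI; apply/negP => /andP [/andP [_ gi] /andP [_ ge]]; move: ge; rewrite in_set1 => /eqP Eg.
    by move: dis; rewrite -Eg gi.

  rewrite cards0 subn0; congr (_ + _).
  case: (boolP (e \in F)) => eF.
    by apply/eqP/cards1P; exists e; apply/setP => g; rewrite !inE; case: (g =P e) => [->|]; rewrite ?eF ?andbF.
  by apply/eqP; rewrite cards_eq0; apply/eqP/setP => g; rewrite !inE; case: (g =P e) => [->|]; rewrite ?(negbTE eF) ?andbF.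
have cT : #|F :&: inside (S :|: T)| <= #|F :&: cut T|.
  apply: subset_leq_card; apply/subsetP => g; rewrite /inside /cut !inE => /andP [gF /andP [/orP [s1|s1] /orP [t1|t1]]]; rewrite gF /=.
  - by have := bip g; rewrite (sA _ s1) (sA _ t1).
  - rewrite t1; case s2: (esrc g \in T) => //; by move: (tA _ s2); rewrite (sA _ s1).
  - rewrite s1; case t2: (etgt g \in T) => //; by move: (tA _ t2); rewrite (sA _ t1).
  - by have := bip g; rewrite (negbTE (tA _ s1)) (negbTE (tA _ t1)).
have GS := GL F S ll; rewrite iS cards0 muln0 add0n in GS.
have GT := GL F T ll; rewrite iT cards0 muln0 add0n in GT.
have GST := GL F (S :|: T) ll.
have sumU : \sum_(v in S :|: T) deg F v = \sum_(v in S) deg F v + \sum_(v in T) deg F v.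
  rewrite -bigU /=; last by rewrite disjoints_subset; apply/subsetP => v /sA vA; rewrite inE; apply/negP => /tA; rewrite vA.
  by apply: eq_bigl => v; rewrite !inE.
have sS : \sum_(v in S) deg F v = deg F x + #|S :\ x|.
  rewrite (big_setD1 x xS) sum_one //; first by rewrite !inE eqxx.
  by rewrite !inE negb_and yS orbT.
have ES := cardsD1 x S; rewrite xS in ES.
split.
  move=> yT; have sT : \sum_(v in T) deg F v = #|T| by rewrite sum_one.
  move: GS GT sS sT cS cT ES cST; clear; lia.
move=> yT.
have sT : \sum_(v in T) deg F v = deg F y + #|T :\ y|.
  rewrite (big_setD1 y yT) sum_one //; first by rewrite !inE negb_and xT orbT.
  by rewrite !inE eqxx.
have ET := cardsD1 y T; rewrite yT in ET.
move: GS GT GST sumU sS sT cS ES ET cST kk; clear; lia.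
Qed.
End HC.

Lemma cmap_None (G : mgraph) (Z : {set gV G}) v : (cmap Z v == None) = (v \in Z).
Proof. rewrite /cmap; case: insubP => [u nv _|nv] /=; first by rewrite (negbTE nv). by rewrite negbK in nv; rewrite nv. Qed.

Lemma cmap_Some (G : mgraph) (Z : {set gV G}) v u : cmap Z v = Some u -> val u = v.
Proof. by rewrite /cmap; case: insubP => [u' _ <- [<-]|]. Qed.

Lemma cmap_val (G : mgraph) (Z : {set gV G}) (p : {v : gV G | v \notin Z}) : cmap Z (val p) = Some p.
Proof. exact: valK. Qed.

Lemma cmap_out (G : mgraph) (Z : {set gV G}) v (h : v \notin Z) : cmap Z v = Some (Sub v h).
Proof.
rewrite /cmap; case: insubP => [u _ E|]; last by rewrite h.
by congr Some; apply: val_inj; rewrite E.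
Qed.

Section GL2.
Variables (G : mgraph) (X Y : {set gV G}).
Hypothesis disj : [disjoint ~: X & ~: Y].
Let G1 := contract (~: X).
Let Yb1 : {set gV G1} := [set cmap (~: X) y | y in ~: Y].
Let H := contract Yb1.
Let xb : gV H := cmap Yb1 (cvtx (~: X)).
Let yb : gV H := cvtx Yb1.
Definition pi (v : gV G) : gV H := cmap Yb1 (cmap (~: X) v).
Definition iotaH (g : gE H) : gE G := val (val g).

Lemma YX v : v \in ~: Y -> v \in X.
Proof.
move=> vY; apply/negPn/negP => vX.
have : ~: X :&: ~: Y = set0 by apply: disjoint_setI0.
by move/setP => /(_ v); rewrite !inE vX; move: vY; rewrite inE => ->.
Qed.

Lemma inYb1 v : (cmap (~: X) v \in Yb1) = (v \in ~: Y).
Proof.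
apply/imsetP/idP => [[y yY E]|vY]; last by exists v.
have yX : y \notin ~: X by rewrite inE negbK YX.
have [p Ep] : exists p, cmap (~: X) y = Some p.
  by rewrite (cmap_out yX); eexists.
by rewrite Ep in E; rewrite -(cmap_Some E) (cmap_Some Ep).
Qed.

Lemma xbNone : (None : gV G1) \notin Yb1.
Proof.
apply/imsetP => [[y yY]]; have yX : y \notin ~: X by rewrite inE negbK YX.
by rewrite (cmap_out yX).
Qed.

Lemma pi_yb v : (pi v == yb) = (v \in ~: Y).
Proof. by rewrite /pi /yb /cvtx cmap_None inYb1. Qed.

Lemma pi_xb v : (pi v == xb) = (v \in ~: X).
Proof.
rewrite /pi /xb /cvtx.
have E : cmap Yb1 (None : gV G1) = Some (Sub None xbNone) by rewrite (cmap_out xbNone).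
rewrite E; case: (boolP (v \in ~: X)) => vX.
  by rewrite -cmap_None in vX; rewrite (eqP vX) E.
apply/negP => /eqP E2.
have := cmap_Some E2 => /= /esym /eqP; by rewrite cmap_None (negbTE vX).
Qed.

Lemma xbyb : xb != yb.
Proof. by rewrite /xb /yb /cvtx (cmap_out xbNone). Qed.

Lemma pi_inj v w : v \in X -> v \in Y -> pi v = pi w -> v = w.
Proof.
move=> vX vY; rewrite /pi.
have vX' : v \notin ~: X by rewrite inE negbK.
have [p Ep] : exists p, cmap (~: X) v = Some p by rewrite (cmap_out vX'); eexists.
have pY : Some p \notin Yb1 by rewrite -Ep inYb1 inE negbK.
have [q Eq] : exists q, cmap Yb1 (Some p) = Some q by rewrite (cmap_out pY); eexists.
rewrite Ep Eq => /esym E2.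
have := cmap_Some E2; rewrite (cmap_Some Eq) => /esym E3.
by rewrite -(cmap_Some Ep) -(cmap_Some E3).
Qed.

Lemma pi_surj (w : gV H) : w != xb -> w != yb -> exists v, [/\ v \in X, v \in Y & w = pi v].
Proof.
case: w => [u|] wx wy; last by case/eqP: wy.
case: u wx wy => [[p|] pY] wx wy /=.
  exists (val p); rewrite /pi cmap_val.
  have pX : val p \in X by have := valP p; rewrite inE negbK.
  have pY' : val p \in Y by have := pY; rewrite -cmap_val inYb1 inE negbK.
  by split => //; rewrite (cmap_out pY); congr Some; apply: val_inj.
case/eqP: wx; rewrite /xb /cvtx (cmap_out xbNone); congr Some; exact: val_inj.
Qed.

Definition isH (h : gE G) := ~~ ((esrc h \in ~: X) && (etgt h \in ~: X)) &&
  ~~ ((cmap (~: X) (esrc h) \in Yb1) && (cmap (~: X) (etgt h) \in Yb1)).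

Lemma iotaH_inj : injective iotaH.
Proof. by move=> g1 g2 /val_inj /val_inj. Qed.

Lemma iotaH_src g : esrc g = pi (esrc (iotaH g)). Proof. by []. Qed.
Lemma iotaH_tgt g : etgt g = pi (etgt (iotaH g)). Proof. by []. Qed.

Lemma isH_iota h : isH h -> exists g, iotaH g = h.
Proof.
case/andP => h1 h2.
exists (Sub (Sub h h1 : gE G1) h2 : gE H); by [].
Qed.

Lemma notH_pi h : ~~ isH h -> pi (esrc h) = pi (etgt h).
Proof.
rewrite /isH negb_and !negbK => /orP [/andP [s t]|].
  by apply/eqP; move: (s) (t); rewrite -!pi_xb => /eqP -> /eqP ->.
by rewrite !inYb1 => /andP [s t]; move: s t; rewrite -!pi_yb => /eqP -> /eqP ->.
Qed.

Definition MH (M : {set gE G}) : {set gE H} := [set g | iotaH g \in M].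

Lemma F3 (M : {set gE G}) (P : {set gV H}) :
  #|M :&: cut [set v | pi v \in P]| = #|MH M :&: cut P|.
Proof.
rewrite -[RHS](card_imset _ iotaH_inj); apply: eq_card => h.
rewrite !inE; apply/andP/imsetP => [[hM hc]|[g]].
  case: (boolP (isH h)) => hH; last by move: hc; rewrite (notH_pi hH) eqxx.
  have [g Eg] := isH_iota hH; exists g => //.
  by rewrite !inE Eg hM iotaH_src iotaH_tgt Eg.
by rewrite !inE => /andP [gM gc] ->; split.
Qed.

Lemma F1 (M : {set gE G}) v : v \in X -> v \in Y -> deg (MH M) (pi v) = deg M v.
Proof.
move=> vX vY; rewrite /deg -[LHS](card_imset _ iotaH_inj); apply: eq_card => h.
have piv : forall w, (pi w == pi v) = (w == v).
  move=> w; apply/eqP/eqP => [E|->] //; by apply/esym/pi_inj.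
rewrite [in RHS]inE; apply/imsetP/andP => [[g]|[hM hi]]; last first.
  have hH : isH h.
    rewrite /isH !inYb1 !inE; move: hi; rewrite /incident => /orP [] /eqP ->;
      rewrite vX vY /= ?andbF //.
  have [g Eg] := isH_iota hH; exists g => //.
  by rewrite !inE Eg hM /incident iotaH_src iotaH_tgt Eg !piv.
by rewrite !inE /incident iotaH_src iotaH_tgt !piv => /andP [gM gi] ->; split.
Qed.
End GL2.

Lemma pm_countG (G : mgraph) (M : {set gE G}) (P : {set gV G}) : loopless G -> perfect_matching M ->
  #|P| = 2 * #|M :&: inside P| + #|M :&: cut P|.
Proof. by move=> ll pm; rewrite -(pm_sum P pm) GL. Qed.

Lemma cutC (G : mgraph) (P : {set gV G}) : cut (~: P) = cut P.
Proof. by apply/setP => g; rewrite !inE; case: (_ \in P); case: (_ \in P). Qed.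

Lemma mc_edge (G : mgraph) : matching_covered G -> exists g : gE G, true.
Proof.
case=> _ conn /card_gt1P [v [w [_ _ vw]]] _.
have /connectP [[|x p] pth E] := conn v w; first by move: vw; rewrite E eqxx.
by move: pth => /= /andP [/existsP [g _] _]; exists g.
Qed.

Lemma cbrick (G : mgraph) (Z : {set gV G}) : loopless G -> brick (contract Z) ->
  2 <= #|~: Z| /\ exists a, #|~: Z| = 2 * a + 1.
Proof.
move=> llG [mc nbip _].
have cV : #|gV (contract Z)| = #|~: Z|.+1.
  rewrite /= /cvert card_option card_sig; congr _.+1; apply: eq_card => v; by rewrite !inE.
have [g _] := mc_edge mc.
have [ll _ _ cov] := mc.
have [N [pm _]] := cov g.
have := pm_countG setT ll pm.
have -> : N :&: cut setT = set0 by apply/setP => h; rewrite !inE andbF.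
rewrite cards0 addn0 cardsT cV => E.
have odd1 : exists a, #|~: Z| = 2 * a + 1.
  exists (#|N :&: inside setT| - 1).
  have : #|~: Z| != 0.
    apply/negP => /eqP Z0; case: nbip; exists [set None] => h.
    have := valP h; rewrite !inE /= !cmap_None.
    have : forall v, v \in Z by move=> v; apply/negPn/negP => vZ; move/eqP: Z0; rewrite cards_eq0 => /eqP/setP/(_ v); rewrite !inE vZ.
    by move=> allZ; rewrite !allZ.
  move: E; clear; lia.
split => //.
have [a Ea] := odd1.
case: a Ea => [|a] Ea; last by lia.
exfalso; case: nbip.
have /cards1P [z Ez] : #|~: Z| == 1 by rewrite Ea.
exists [set None] => h.
have := valP h; rewrite !inE /= !cmap_None.
case: (boolP (esrc (val h) \in Z)) => sZ; case: (boolP (etgt (val h) \in Z)) => tZ //= _.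
have : esrc (val h) \in ~: Z by rewrite inE.
have : etgt (val h) \in ~: Z by rewrite inE.
rewrite Ez !inE => /eqP t /eqP s.
by move: (llG (val h)); rewrite s t eqxx.
Qed.

Section GL3.
Variables (G : mgraph) (X Y : {set gV G}).
Hypotheses (disj : [disjoint ~: X & ~: Y]) (bG : brick G)
  (bX : brick (contract X)) (bY : brick (contract Y)).
Let G1 := contract (~: X).
Let Yb1 : {set gV G1} := [set cmap (~: X) y | y in ~: Y].
Let H := contract Yb1.
Let xb : gV H := cmap Yb1 (cvtx (~: X)).
Let yb : gV H := cvtx Yb1.
Hypothesis llH : loopless H.

Let llG : loopless G. Proof. by case: bG => [[]]. Qed.

Lemma sizes : [/\ 2 <= #|~: X|, 2 <= #|X|, 2 <= #|~: Y| &
   (exists a, #|~: X| = 2 * a + 1) /\ (exists a, #|~: Y| = 2 * a + 1)].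
Proof.
have [cx ox] := cbrick llG bX; have [cy oy] := cbrick llG bY.
split => //.
apply: leq_trans cy _; apply: subset_leq_card; apply/subsetP => v; exact: YX.
Qed.

Lemma KX : (forall M, perfect_matching M -> #|M :&: cut (~: X)| <= 2) -> False.
Proof.
move=> Hc.
have [sX sX' _ [[a Ea] _]] := sizes.
have [_ _ triv] := bG.
have tX : tight_cut X.
  move=> M pm; rewrite -cutC.
  have := pm_countG (~: X) llG pm; have := Hc M pm; rewrite Ea.
  move: (#|M :&: inside (~: X)|) (#|M :&: cut (~: X)|); clear; lia.
case: (triv X tX) => E; [move: sX'|move: sX]; by rewrite E.
Qed.

Lemma deg_single (F : {set gE H}) (w : gV H) : deg F w = #|F :&: cut [set w]|.
Proof.
have := GL F [set w] llH; rewrite big_set1 => ->.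
have -> : F :&: inside [set w] = set0.
  apply/setP => g; rewrite !inE; apply/negP => /and3P [_ /eqP s /eqP t].
  by move: (llH g); rewrite s t eqxx.
by rewrite cards0.
Qed.

Lemma degxb M : deg (MH X Y M) xb = #|M :&: cut (~: X)|.
Proof.
rewrite deg_single -(F3 disj).
have -> : [set v | pi X Y v \in [set xb]] = ~: X.
  by apply/setP => v; rewrite inE in_set1 (pi_xb disj).
by [].
Qed.

Lemma degyb M : deg (MH X Y M) yb = #|M :&: cut (~: Y)|.
Proof.
rewrite deg_single -(F3 disj).
have -> : [set v | pi X Y v \in [set yb]] = ~: Y.
  by apply/setP => v; rewrite inE in_set1 (pi_yb disj).
by [].
Qed.

Lemma deg1 M : perfect_matching M -> forall w, w != xb -> w != yb -> deg (MH X Y M) w = 1.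
Proof.
move=> pm w wx wy; have [v [vX vY ->]] := pi_surj disj wx wy.
by rewrite (F1 disj) //; apply: pm.
Qed.


Lemma ends_split (K : mgraph) (u : gV K) h : incident u h ->
  (esrc h = u /\ etgt h = other u h) \/ (etgt h = u /\ esrc h = other u h).
Proof.
rewrite /incident /other; case: (esrc h =P u) => [->|_] /=; first by left.
by move/eqP => ->; right.
Qed.

Lemma pi_other g u : incident u (iotaH g) ->
  incident (pi X Y u) g /\ other (pi X Y u) g = pi X Y (other u (iotaH g)).
Proof.
move=> /ends_split [[s t]|[t s]].
  rewrite /incident /other iotaH_src iotaH_tgt s t eqxx /=; split => //.
  by rewrite /other s eqxx.
rewrite /incident /other iotaH_src iotaH_tgt s t eqxx orbT; split => //.
case: (pi X Y (other u (iotaH g)) =P pi X Y u) => [E|_].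
  by move: (llH g); rewrite iotaH_src iotaH_tgt s t E eqxx.
have -> : other u (iotaH g) = esrc (iotaH g) by rewrite s.
by rewrite /other; case: (esrc (iotaH g) =P u) => // E; move: s; rewrite -E /other eqxx => ->.
Qed.

Lemma caseIII (A S T : {set gV H}) (e : gE H) : bipA A -> #|A| = #|~: A| -> xb \in A ->
  incident xb e -> (xb \in S) && (S \subset A) -> T \subset ~: A -> #|S| = #|T| ->
  (esrc e \notin T) && (etgt e \notin T) ->
  (forall g, g != e -> forall s, s \in S -> incident s g -> other s g \in T) -> yb \in T -> False.
Proof.
move=> bip cAB xA ie /andP [xS SA] TA cST eT STg yT.
have [sX sX' sY _] := sizes.
have [_ _ triv] := bG.
pose eG := iotaH e.
pose u := if pi X Y (esrc eG) == xb then esrc eG else etgt eG.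
have [iu pu] : incident u eG /\ pi X Y u = xb.
  rewrite /u; case: (boolP (pi X Y (esrc eG) == xb)) => [/eqP E|N].
    by rewrite /incident eqxx.
  move: ie; rewrite /incident iotaH_src (negbTE N) /= => /eqP E.
  by rewrite eqxx orbT.
have [ie' oe] := pi_other iu; rewrite pu in ie' oe.
pose b := other u eG.
have pb : pi X Y b = other xb e by rewrite -oe.
have beA : other xb e \notin A by rewrite (other_bip bip ie) xA.
have sA : forall v, v \in S -> v \in A by move=> v; apply: (subsetP SA).
have tA : forall v, v \in T -> v \notin A by move=> v /(subsetP TA); rewrite inE.
have beS : other xb e \notin S by apply/negP => /sA; rewrite (negbTE beA).
have beT : other xb e \notin T.
  by case/orP: (other_end ie) => /eqP ->; case/andP: eT.
have yA : yb \notin A by apply: tA.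
pose QH := ~: (S :|: T).
pose Q := [set v | pi X Y v \in QH].
pose R := u |: Q.
have uQ : u \notin Q by rewrite !inE pu xS.
have bQ : b \in Q by rewrite !inE pb negb_or beS beT.
have QXY : forall v, v \in Q -> (v \in X) && (v \in Y).
  move=> v; rewrite !inE negb_or => /andP [vS vT].
  apply/andP; split.
    apply/negPn/negP => vX; have /eqP E : pi X Y v == xb by rewrite (pi_xb disj) inE.
    by move: vS; rewrite E xS.
  apply/negPn/negP => vY; have /eqP E : pi X Y v == yb by rewrite (pi_yb disj) inE.
  by move: vT; rewrite E yT.
have key : forall h, incident u h -> other u h \in Q -> h = eG.
  move=> h ih oQ; apply/eqP/negP => /negP hne.
  have /andP [wX wY] := QXY _ oQ.
  have uX : u \in ~: X by rewrite -(pi_xb disj) pu.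
  have hH : isH X Y h.
    rewrite /isH !(inYb1 disj); case: (ends_split ih) => [[-> ->]|[-> ->]];
      by rewrite !inE wX wY ?andbF.
  have [g Eg] := isH_iota hH.
  have ge : g != e by apply/negP => /eqP E; case/negP: hne; rewrite -Eg E.
  rewrite -Eg in ih oQ.
  have [ig og] := pi_other ih; rewrite pu in ig og.
  have := STg g ge xb xS ig; rewrite og.
  by move: oQ; rewrite !inE negb_or => /andP [_ /negbTE ->].
have tight : tight_cut R.
  move=> M pm.
  have cQ : #|M :&: cut Q| = 2 * (eG \in M).
    rewrite (F3 disj) -cutC setCK.
    have [_ h2] := HcountST (F := MH X Y M) (y := yb) llH bip cAB xA (deg1 pm) xS SA TA cST eT ie STg yA.
    by rewrite h2 // inE.
  have iR : M :&: inside R = (M :&: inside Q) :|: (M :&: [set eG]).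
    apply/setP => h; rewrite in_setU !in_setI; case: (boolP (h \in M)) => //= hM.
    apply/idP/idP; last first.
      case/orP; first by rewrite /inside !inE => /andP [-> ->]; rewrite !orbT.
      rewrite inE => /eqP ->; rewrite /inside in_set.
      have bQ' : other u eG \in Q by [].
      case: (ends_split iu) => [[-> ->]|[-> ->]]; by rewrite !in_setU1 eqxx bQ' ?orbT.
    move=> hin; have : (esrc h \in R) && (etgt h \in R) by move: hin; rewrite /inside in_set.
    rewrite !in_setU1 => /andP [/orP [/eqP su|sQ] /orP [/eqP tu|tQ]].
    - by move: (llG h); rewrite su tu eqxx.
    - apply/orP; right; rewrite in_set1; apply/eqP/key => //.
        by rewrite /incident su eqxx.
      by rewrite /other su eqxx.
    - apply/orP; right; rewrite in_set1; apply/eqP/key => //.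
        by rewrite /incident tu eqxx orbT.
      rewrite /other; case: (esrc h =P u) => // E.
      by move: uQ; rewrite -E sQ.
    - by rewrite /inside in_set sQ tQ.
  have ciR : #|M :&: inside R| = #|M :&: inside Q| + (eG \in M).
    rewrite iR cardsU.
    have -> : M :&: inside Q :&: (M :&: [set eG]) = set0.
      apply/setP => h; rewrite in_set0 !in_setI; apply/negP => /andP [/andP [_ hi] /andP [_]].
      rewrite in_set1 => /eqP Eh; move: hi; rewrite Eh /inside in_set.
      by case: (ends_split iu) => [[-> _]|[-> _]]; rewrite (negbTE uQ) ?andbF.
    rewrite cards0 subn0; congr (_ + _).
    case: (boolP (eG \in M)) => eM.
      by apply/eqP/cards1P; exists eG; apply/setP => g; rewrite !inE; case: (g =P eG) => [->|]; rewrite ?eM ?andbF.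
    by apply/eqP; rewrite cards_eq0; apply/eqP/setP => g; rewrite !inE; case: (g =P eG) => [->|]; rewrite ?(negbTE eM) ?andbF.
  have cR : #|R| = #|Q| + 1 by rewrite cardsU1 uQ addnC.
  have := pm_countG R llG pm; have := pm_countG Q llG pm.
  rewrite cR ciR cQ.
  move: (#|M :&: inside Q|) (#|M :&: cut Q|) (#|M :&: cut R|) (eG \in M : nat) (#|Q|); clear; lia.
case: (triv R tight) => E.
  have : 1 < #|R|.
    apply/card_gt1P; exists u, b; split; rewrite ?in_setU1 ?eqxx ?bQ ?orbT //.
    by apply/negP => /eqP E2; move: uQ; rewrite E2 bQ.
  by rewrite E.
have : 1 < #|~: R|.
  apply: leq_trans sY _; apply: subset_leq_card; apply/subsetP => v vY.
  rewrite !inE negb_or; apply/andP; split.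
    apply/negP => /eqP Evu; move: vY; rewrite Evu => uY.
    have uX : u \in ~: X by rewrite -(pi_xb disj) pu.
    by move: (YX disj uY); rewrite inE in uX; rewrite (negbTE uX).
  by have := vY; rewrite -(pi_yb disj) => /eqP ->; rewrite yT orbT.
by rewrite E.
Qed.
End GL3.

Theorem mainTheorem12 (G : mgraph) (X Y : {set gV G}) :
  brick G ->
  ~: X != set0 -> ~: Y != set0 -> [disjoint ~: X & ~: Y] ->
  brick (contract X) -> brick (contract Y) ->
  let G1 := contract (~: X) in
  let Ybar1 : {set gV G1} := [set cmap (~: X) y | y in ~: Y] in
  let H := contract Ybar1 in
  let xbar : gV H := cmap Ybar1 (cvtx (~: X)) in
  bipartite H -> matching_covered H ->
  forall e : gE H, incident xbar e -> removable e.
Proof.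
move=> bG nX nY disj bX bY G1 Yb1 H xb [A0 bip0] mcH e ie.
have [llH _ _ covH] := mcH.
have [A [bip xA]] : exists A : {set gV H}, bipA A /\ xb \in A.
  case: (boolP (xb \in A0)) => xA0; first by exists A0.
  by exists (~: A0); split; [exact: bipC|rewrite inE].
have cAB : #|A| = #|~: A|.
  have [N [pmN _]] := covH e.
  by rewrite (bip_card llH bip pmN) (bip_card llH (bipC bip) pmN).
apply: (Hremovable mcH bip xA ie).
  case: (boolP [exists f, f != e]) => [/existsP [f fe]|]; first by exists f.
  rewrite negb_exists => /forallP allE; exfalso.
  apply: (KX disj bG bX bY) => M pm; rewrite -(degxb disj llH).
  have sub : [set g in MH X Y M | incident xb g] \subset [set e].
    by apply/subsetP => g _; rewrite in_set1; have := allE g; rewrite negbK.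
  by have := subset_leq_card sub; rewrite cards1 /deg => H1; apply: leq_trans H1 _.
move=> S T [/andP [xS SA] TA cST eT STg].
case: (boolP (cvtx Yb1 \in A)) => yA.
  apply: (KX disj bG bX bY) => M pm; rewrite -(degxb disj llH).
  have := HcountA llH bip cAB xA (xbyb disj) (deg1 disj pm) yA.
  by move=> E; rewrite -E leq_addr.
case: (boolP (cvtx Yb1 \in T)) => yT.
  by apply: (caseIII disj bG bX bY llH bip cAB xA ie _ TA cST eT STg yT); rewrite xS.
apply: (KX disj bG bX bY) => M pm; rewrite -(degxb disj llH).
have [h1 _] := HcountST llH bip cAB xA (deg1 disj pm) xS SA TA cST eT ie STg yA.
exact: h1.
Qed.
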